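(* Let $\chi:VB_n\to M_n$ be the homomorphism with $\chi(\sigma_i)=s_i$, $\chi(\rho_i)=t_i$ ($i=1,\dots,n-1$), and let $\eta_1,\eta_2:M_n\to S_n$ be the homomorphisms with $\eta_1(s_i)=1$, $\eta_1(t_i)=(i\ i{+}1)$, and $\eta_2(s_i)=\eta_2(t_i)=(i\ i{+}1)$. Then: (i) $H_n=\ker(\eta_1\circ\chi)$; (ii) $VP_n=\ker(\eta_2\circ\chi)$; (iii) $H_n\cap VP_n=\ker\chi$.
   Context: The virtual braid group $VB_n$ is the group with generators $\sigma_i,\rho_i$ ($i=1,\dots,n-1$) and defining relations: $\sigma_i\sigma_{i+1}\sigma_i=\sigma_{i+1}\sigma_i\sigma_{i+1}$ ($1\le i\le n-2$); $\sigma_i\sigma_j=\sigma_j\sigma_i$ ($|i-j|\geq 2$); $\rho_i\rho_{i+1}\rho_i=\rho_{i+1}\rho_i\rho_{i+1}$ ($1\le i\le n-2$); $\rho_i\rho_j=\rho_j\rho_i$ ($|i-j|\geq 2$); $\rho_i^2=1$; $\sigma_i\rho_j=\rho_j\sigma_i$ ($|i-j|\geq2$); $\rho_i\rho_{i+1}\sigma_i=\sigma_{i+1}\rho_i\rho_{i+1}$ ($1\le i\le n-2$). $M_n=S_n\rtimes S_n$, where the second factor acts on the first by conjugation; $s_i$ is the transposition $(i\ i{+}1)$ in the first factor and $t_i$ the transposition $(i\ i{+}1)$ in the second factor. $H_n$ is the normal closure of $\langle\sigma_1,\dots,\sigma_{n-1}\rangle$ in $VB_n$. $VP_n$ is the kernel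 of $\nu:VB_n\to S_n$, $\nu(\sigma_i)=\nu(\rho_i)=(i\ i{+}1)$. The kernel $\ker\chi$ is called the extended pure braid group $EP_n$. *)

(* Defs.v *)
(* Virtual braid group VB_n presented by words modulo the
   congruence generated by free cancellation and the defining relations. *)
From mathcomp Require Import all_boot all_fingroup.
Set Implicit Arguments. Unset Strict Implicit. Unset Printing Implicit Defensive.
Local Open Scope group_scope.

(* Transposition (i+1 i+2) (1-based) = (i i+1) on 'I_n (0-based), for i+1 < n. *)
Definition adj (n i : nat) : 'S_n :=
  match @idP (i.+1 < n)%N with
  | ReflectT h => tperm (Ordinal (ltnW h)) (Ordinal h)
  | ReflectF _ => 1
  end.

(* A letter (s, i, e): s = true for sigma, false for rho; index i : 'I_n.-1
   stands for generator number i+1 (1 <= i+1 <= n-1); e = true for inverse. *)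
Definition letter (n : nat) := (bool * 'I_n.-1 * bool)%type.
Definition word (n : nat) := seq (letter n).

Definition sig {n} (i : 'I_n.-1) : letter n := (true, i, false).
Definition rho {n} (i : 'I_n.-1) : letter n := (false, i, false).
Definition linv {n} (x : letter n) : letter n := (x.1.1, x.1.2, ~~ x.2).
Definition winv {n} (w : word n) : word n := rev (map linv w).

Definition far {n} (i j : 'I_n.-1) : bool := (i.+2 <= j) || (j.+2 <= i).

Inductive vb_rel (n : nat) : word n -> word n -> Prop :=
| R_sbraid (i j : 'I_n.-1) : val j = (val i).+1 ->
    vb_rel [:: sig i; sig j; sig i] [:: sig j; sig i; sig j]
| R_sfar (i j : 'I_n.-1) : far i j -> vb_rel [:: sig i; sig j] [:: sig j; sig i]
| R_rbraid (i j : 'I_n.-1) : val j = (val i).+1 ->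
    vb_rel [:: rho i; rho j; rho i] [:: rho j; rho i; rho j]
| R_rfar (i j : 'I_n.-1) : far i j -> vb_rel [:: rho i; rho j] [:: rho j; rho i]
| R_rsq (i : 'I_n.-1) : vb_rel [:: rho i; rho i] [::]
| R_mfar (i j : 'I_n.-1) : far i j -> vb_rel [:: sig i; rho j] [:: rho j; sig i]
| R_mixed (i j : 'I_n.-1) : val j = (val i).+1 ->
    vb_rel [:: rho i; rho j; sig i] [:: sig j; rho i; rho j].

Inductive vb_eq (n : nat) : word n -> word n -> Prop :=
| E_refl w : vb_eq w w
| E_sym u v : vb_eq u v -> vb_eq v u
| E_trans u v w : vb_eq u v -> vb_eq v w -> vb_eq u w
| E_ctx a b u v : vb_eq u v -> vb_eq (a ++ u ++ b) (a ++ v ++ b)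
| E_cancel (x : letter n) : vb_eq [:: x; linv x] [::]
| E_rel u v : vb_rel u v -> vb_eq u v.

Inductive nc_sig (n : nat) : word n -> Prop :=
| NC_nil : nc_sig [::]
| NC_cons (g : word n) (i : 'I_n.-1) (e : bool) (w : word n) :
    nc_sig w -> nc_sig (g ++ [:: (true, i, e)] ++ winv g ++ w).

(* H_n: normal closure of <sigma_1,...,sigma_{n-1}> in VB_n. *)
Definition inH {n} (w : word n) : Prop := exists u, nc_sig u /\ vb_eq u w.

Definition nu_letter {n} (x : letter n) : 'S_n :=
  if x.2 then (adj n x.1.2)^-1 else adj n x.1.2.
Definition nu {n} (w : word n) : 'S_n := \prod_(x <- w) nu_letter x.

(* M_n = S_n x| S_n, second factor acting on first by conjugation:
   (g,h)(g',h') = (g * (h g' h^-1), h h'). *)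
Definition Mn (n : nat) := ('S_n * 'S_n)%type.
Definition mmul {n} (x y : Mn n) : Mn n :=
  (x.1 * (x.2 * y.1 * x.2^-1), x.2 * y.2).
Definition mone {n} : Mn n := (1, 1).
Definition minv {n} (x : Mn n) : Mn n :=
  (x.2^-1 * x.1^-1 * x.2, x.2^-1).
Definition s_ {n} (i : 'I_n.-1) : Mn n := (adj n i, 1).
Definition t_ {n} (i : 'I_n.-1) : Mn n := (1, adj n i).

Definition chi_letter {n} (x : letter n) : Mn n :=
  let g := if x.1.1 then s_ x.1.2 else t_ x.1.2 in
  if x.2 then minv g else g.
Definition chi {n} (w : word n) : Mn n := foldr (fun x acc => mmul (chi_letter x) acc) mone w.

Definition eta1 {n} (x : Mn n) : 'S_n := x.2.
Definition eta2 {n} (x : Mn n) : 'S_n := x.1 * x.2.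

(* Main.v *)
Require Import Defs.
From mathcomp Require Import all_boot all_fingroup zify.
Set Implicit Arguments. Unset Strict Implicit.
Local Open Scope group_scope.

Lemma tperm_braid (T : finType) (a b c : T) : a != b -> b != c -> a != c ->
  tperm a b * tperm b c * tperm a b = tperm b c * tperm a b * tperm b c.
Proof.
move=> ab bc ac.
have E1 : tperm a b * tperm b c * tperm a b = tperm b c ^ tperm a b
  by rewrite conjgE tpermV mulgA.
have E2 : tperm b c * tperm a b * tperm b c = tperm a b ^ tperm b c
  by rewrite conjgE tpermV mulgA.
rewrite E1 E2 !tpermJ tpermR tpermL (tpermD ac bc) tpermD //; rewrite eq_sym //.
Qed.

Lemma tperm_comm (T : finType) (a b c d : T) : a != c -> a != d -> b != c -> b != d ->
  tperm a b * tperm c d = tperm c d * tperm a b.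
Proof.
move=> ac ad bc bd.
have E1 : tperm a b * tperm c d * tperm a b = tperm c d
  by rewrite -{1}(tpermV a b) -mulgA -conjgE tpermJ !tpermD.
by rewrite -{2}E1 -mulgA tperm2 mulg1.
Qed.

Definition isrho {n} (x : letter n) : bool := ~~ x.1.1.
Definition F {n} (w : word n) : 'S_n := nu (filter isrho w).

Lemma nu_cons n (x : letter n) w : nu (x :: w) = nu_letter x * nu w.
Proof. by rewrite /nu big_cons. Qed.
Lemma nu_cat n (u v : word n) : nu (u ++ v) = nu u * nu v.
Proof. by rewrite /nu big_cat. Qed.
Lemma F_cat n (u v : word n) : F (u ++ v) = F u * F v.
Proof. by rewrite /F filter_cat nu_cat. Qed.
Lemma F_cons n (x : letter n) w : F (x :: w) = (if isrho x then nu_letter x else 1) * F w.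
Proof. by rewrite /F /=; case: ifP => _; rewrite ?nu_cons ?mul1g. Qed.
Lemma F_nil n : F ([::] : word n) = 1.
Proof. by rewrite /F /nu big_nil. Qed.

Lemma chi_cons n (x : letter n) w : chi (x :: w) = mmul (chi_letter x) (chi w).
Proof. by []. Qed.

Lemma chi2 n (w : word n) : (chi w).2 = F w.
Proof.
elim: w => [|x w IH]; first by rewrite F_nil.
rewrite chi_cons F_cons /= -IH; congr (_ * _).
case: x => [[[] i] []]; by rewrite /chi_letter /nu_letter /= ?invg1.
Qed.

Lemma chi12 n (w : word n) : (chi w).1 * (chi w).2 = nu w.
Proof.
elim: w => [|x w IH]; first by rewrite /nu big_nil /= mulg1.
rewrite chi_cons nu_cons -IH /mmul /= !mulgA mulgKV; congr (_ * _ * _).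
case: x => [[[] i] []]; rewrite /chi_letter /nu_letter /= ?invg1 ?mulg1 ?mul1g ?mulgKV.
all: by rewrite ?mulVg ?mul1g.
Qed.

Definition tr n' (k : nat) : 'S_n'.+2 := tperm (inord k) (inord k.+1).

Lemma adjE n' (i : 'I_n'.+1) : adj n'.+2 i = tr n' i.
Proof.
rewrite /adj; destruct (@idP (i.+1 < n'.+2)) as [h|h]; last by rewrite ltnS ltn_ord in h.
by congr tperm; apply: val_inj; rewrite /= inordK // ltnW.
Qed.

Lemma inord_neq n' a b : a < n'.+1 -> b < n'.+1 -> a != b ->
  (inord a : 'I_n'.+1) != inord b.
Proof.
move=> ha hb ab; apply: contraNneq ab => /(congr1 val) /=; by rewrite !inordK // => ->.
Qed.

Lemma tr_braid n' k : k.+1 < n'.+1 ->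
  tr n' k * tr n' k.+1 * tr n' k = tr n' k.+1 * tr n' k * tr n' k.+1.
Proof. move=> h; apply: tperm_braid; apply: inord_neq; lia. Qed.

Lemma tr_comm n' k x : k < n'.+1 -> x < n'.+1 -> (k.+2 <= x) || (x.+2 <= k) ->
  tr n' k * tr n' x = tr n' x * tr n' k.
Proof. move=> h1 h2 h3; apply: tperm_comm; apply: inord_neq; lia. Qed.

Lemma tr2 n' k : tr n' k * tr n' k = 1.
Proof. exact: tperm2. Qed.

Lemma F_vb n' (u v : word n'.+2) : vb_eq u v -> F u = F v.
Proof.
elim=> {u v} //.
- by move=> u v w _ -> _ ->.
- by move=> a b u v _ E; rewrite !F_cat E.
- move=> [[[] i] []]; rewrite !F_cons F_nil /isrho /nu_letter /= ?mulg1 //.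
  + by rewrite mulVg.
  + by rewrite mulgV.
- move=> u v []; clear u v; intros.
  all: rewrite /rho /sig ?F_cons ?F_nil /isrho /nu_letter /= ?mulg1 ?mul1g ?adjE //.
  + rewrite /= in e; rewrite e !mulgA; apply: tr_braid; rewrite -e; exact: ltn_ord.
  + by apply: tr_comm.
  + by rewrite tr2.
Qed.

Lemma linvK n (x : letter n) : linv (linv x) = x.
Proof. by case: x => [[b i] e]; rewrite /linv /= negbK. Qed.

Lemma winv_cons n (x : letter n) g : winv (x :: g) = winv g ++ [:: linv x].
Proof. by rewrite /winv /= rev_cons cats1. Qed.

Lemma F_linv n (x : letter n) : F [:: linv x] = (F [:: x])^-1.
Proof.
case: x => [[[] i] []]; rewrite !F_cons !F_nil /isrho /nu_letter /= ?invg1 ?mulg1 //.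
all: by rewrite ?invg1 ?invgK.
Qed.

Lemma F_winv n (g : word n) : F (winv g) = (F g)^-1.
Proof.
elim: g => [|x g IH]; first by rewrite /winv /= F_nil invg1.
rewrite winv_cons F_cat IH F_linv -(cat1s x g) F_cat invMg. done.
Qed.

Lemma F_nc n (u : word n) : nc_sig u -> F u = 1.
Proof.
elim=> [|g i e w _ IH]; first exact: F_nil.
by rewrite !F_cat IH F_winv F_cons F_nil /isrho /= !mulg1 mul1g mulgV.
Qed.

Lemma vb_cat n (a a' b b' : word n) : vb_eq a a' -> vb_eq b b' -> vb_eq (a ++ b) (a' ++ b').
Proof.
move=> ha hb; apply: (E_trans (v := a' ++ b)).
- exact: (E_ctx [::] b ha).
- have := E_ctx a' [::] hb; by rewrite !cats0.
Qed.

Lemma nc_cat n (u v : word n) : nc_sig u -> nc_sig v -> nc_sig (u ++ v).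
Proof.
elim=> [//|g i e w _ IH] hv; rewrite -!catA; apply: NC_cons; exact: IH.
Qed.

Lemma inH_vb n (u v : word n) : inH u -> vb_eq u v -> inH v.
Proof. move=> [h [h1 h2]] e; exists h; split=> //; exact: E_trans e. Qed.

Lemma inH_cat n (u v : word n) : inH u -> inH v -> inH (u ++ v).
Proof.
move=> [a [a1 a2]] [b [b1 b2]]; exists (a ++ b); split; [exact: nc_cat | exact: vb_cat].
Qed.

Lemma inH_nil n : inH ([::] : word n).
Proof. exists [::]; split; [exact: NC_nil | exact: E_refl]. Qed.

Lemma inH_sig n (i : 'I_n.-1) e : inH [:: (true, i, e)].
Proof. exists [:: (true, i, e)]; split; last exact: E_refl.
exact: (NC_cons [::] i e (@NC_nil n)). Qed.

Lemma vb_ins n (x : letter n) a b : vb_eq (a ++ b) (a ++ [:: linv x; x] ++ b).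
Proof.
have := E_ctx a b (E_sym (E_cancel (linv x))); rewrite linvK /=; done.
Qed.

Lemma inH_conj n (x : letter n) u : nc_sig u -> inH (x :: u ++ [:: linv x]).
Proof.
elim=> [|g i e w _ IH].
- exact: (inH_vb (@inH_nil n) (E_sym (E_cancel x))).
- have E : vb_eq ((x :: g ++ [:: (true, i, e)] ++ winv g) ++ w ++ [:: linv x])
                 ((x :: g ++ [:: (true, i, e)] ++ winv g) ++ [:: linv x; x] ++ w ++ [:: linv x])
    by apply: vb_ins.
  have E1 : x :: (g ++ [:: (true, i, e)] ++ winv g ++ w) ++ [:: linv x] =
     (x :: g ++ [:: (true, i, e)] ++ winv g) ++ w ++ [:: linv x].
  by do 3! rewrite /= -?catA.
  have E2 : (x :: g ++ [:: (true, i, e)] ++ winv g) ++ [:: linv x; x] ++ w ++ [:: linv x]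
      = ((x :: g) ++ [:: (true, i, e)] ++ winv (x :: g) ++ [::]) ++ (x :: w ++ [:: linv x])
      by rewrite winv_cons; do 3! rewrite /= -?catA.
  rewrite E1; apply: (inH_vb _ (E_sym E)); rewrite E2.
  apply: inH_cat => //.
  exists ((x :: g) ++ [:: (true, i, e)] ++ winv (x :: g) ++ [::]); split; last exact: E_refl.
  apply: NC_cons; exact: NC_nil.
Qed.

Definition rw n' (l : seq nat) : word n'.+2 := map (fun k => @rho n'.+2 (@inord n' k)) l.
Definition req n' (l1 l2 : seq nat) := vb_eq (rw n' l1) (rw n' l2).

Lemma rw_cat n' a b : rw n' (a ++ b) = rw n' a ++ rw n' b.
Proof. exact: map_cat. Qed.

Lemma req_refl n' a : req n' a a.
Proof. exact: E_refl. Qed.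
Lemma req_sym n' a b : req n' a b -> req n' b a.
Proof. exact: E_sym. Qed.
Lemma req_trans n' a b c : req n' a b -> req n' b c -> req n' a c.
Proof. exact: E_trans. Qed.
Lemma req_cat n' a a' b b' : req n' a a' -> req n' b b' -> req n' (a ++ b) (a' ++ b').
Proof. rewrite /req !rw_cat; exact: vb_cat. Qed.
Lemma req_catl n' a b b' : req n' b b' -> req n' (a ++ b) (a ++ b').
Proof. apply: req_cat; exact: req_refl. Qed.
Lemma req_catr n' a a' b : req n' a a' -> req n' (a ++ b) (a' ++ b).
Proof. move=> h; apply: req_cat h _; exact: req_refl. Qed.

Lemma req_sq n' k : k < n'.+1 -> req n' [:: k; k] [::].
Proof. move=> h; exact: (E_rel (R_rsq _)). Qed.

Lemma req_far n' k x : k < n'.+1 -> x < n'.+1 -> (k.+2 <= x) || (x.+2 <= k) ->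
  req n' [:: k; x] [:: x; k].
Proof.
move=> hk hx hf; apply: (E_rel (R_rfar _)); by rewrite /far !inordK.
Qed.

Lemma req_braid n' k : k.+1 < n'.+1 -> req n' [:: k; k.+1; k] [:: k.+1; k; k.+1].
Proof.
move=> h; apply: (E_rel (R_rbraid _)); rewrite /= !inordK //; lia.
Qed.

Lemma F_rw_cons n' k l : k < n'.+1 -> F (rw n' (k :: l)) = tr n' k * F (rw n' l).
Proof.
move=> h; rewrite /rw /= F_cons /isrho /nu_letter /= adjE inordK //.
Qed.

Lemma F_rw_cat n' a b : F (rw n' (a ++ b)) = F (rw n' a) * F (rw n' b).
Proof. by rewrite rw_cat F_cat. Qed.

Lemma req_comm n' k s : k < n'.+1 ->
  all (fun x => (x < n'.+1) && ((k.+2 <= x) || (x.+2 <= k))) s ->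
  req n' (s ++ [:: k]) (k :: s).
Proof.
move=> hk; elim: s => [|x s IH] /=; first by move=> _; exact: req_refl.
case/andP => /andP [hx hf] hs.
apply: (req_trans (b := x :: k :: s)).
- exact: (req_catl [:: x] (IH hs)).
- have := req_catr s (req_far hx hk _); rewrite orbC hf; apply; done.
Qed.

Fixpoint D (m l : nat) : seq nat := if l is l'.+1 then m :: D m.-1 l' else [::].

Lemma D_rcons m l : D m l.+1 = rcons (D m l) (m - l).
Proof.
elim: l m => [|l IH] m; first by rewrite /= subn0.
change (m :: D m.-1 l.+1 = rcons (m :: D m.-1 l) (m - l.+1)).
rewrite IH /=; congr (_ :: _); congr rcons; lia.
Qed.

Lemma D_split m a b : D m (a + b) = D m a ++ D (m - a) b.
Proof.
elim: a m => [|a IH] m; first by rewrite subn0.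
rewrite addSn /= IH; congr (_ :: _ ++ D _ _); lia.
Qed.

Lemma D_mem m l x : l <= m.+1 -> x \in D m l -> (m.+1 - l <= x) && (x <= m).
Proof.
elim: l m => [|l IH] m //= hl; rewrite in_cons => /orP [/eqP -> | hx].
- apply/andP; split; lia.
- case: m hl hx => [|m] hl hx; first by case: l {IH} hl hx.
  have := IH m hl hx; rewrite /=; move=> /andP [h1 h2]; apply/andP; split; lia.
Qed.

Lemma absorb n' m k l : m < n'.+1 -> k <= m -> l <= m.+1 ->
  exists u l', [/\ all (fun x => x < m) u, l' <= m.+1 &
    req n' (D m l ++ [:: k]) (u ++ D m l')].
Proof.
move=> hm hk hl.
have Dall : forall x, x \in D m l -> (m.+1 - l <= x) && (x <= m) by move=> x; exact: D_mem.
case: (ltnP k.+1 (m.+1 - l)) => h1.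
{
  exists [:: k], l; split => //=; first by rewrite andbT; lia.
  apply: req_comm; first lia.
  apply/allP => x /Dall /andP [h2 h3]; apply/andP; split; lia. }
case: (ltnP k (m.+1 - l)) => h2.
{
  exists [::], l.+1; split => //; first lia.
  rewrite D_rcons -cats1 /=; have -> : m - l = k by lia. exact: req_refl. }
case: (ltnP (m.+1 - l) k) => h3; last first.
{
  case: l hl h1 h2 h3 Dall => [|l0] hl h1 h2 h3 Dall; first lia.
  exists [::], l0; split => //; first lia.
  rewrite D_rcons -cats1 -catA /=; have -> : m - l0 = k by lia.
  have := req_catl (D m l0) (req_sq (k := k) (n' := n') _); rewrite cats0; apply; lia. }
case: k hk h1 h2 h3 Dall => [|i] hk h1 h2 h3 Dall; first lia.
exists [:: i], l; split => //=; first by rewrite andbT; lia.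
set a := m - i.+1.
set b := l - a - 2.
have El : l = a + b.+2 by rewrite /a /b; lia.
have Ema : m - a = i.+1 by rewrite /a; lia.
rewrite El D_split Ema /=.
set T := D i.-1 b.
set A := D m a.
have HA : forall x, x \in A -> (i.+2 <= x) && (x <= m).
  move=> x hx; have := D_mem (l := a) (m := m) _ hx; rewrite /a; move=> H.
  have /andP [H1 H2] := H ltac:(lia); apply/andP; split; lia.
have HT : forall x, x \in T -> x.+1 <= i.
  move=> x hx; have /andP [H1 H2] := D_mem (m := i.-1) (l := b) ltac:(rewrite /b /a; lia) hx; lia.
apply: (req_trans (b := A ++ [:: i.+1, i & i.+1 :: T])).
  have := req_catl (A ++ [:: i.+1; i]) (req_comm (k := i.+1) (s := T) (n' := n') _ _).
  rewrite -!catA /=; apply; first lia.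
  apply/allP => x /HT hx; apply/andP; split; lia.
apply: (req_trans (b := A ++ [:: i, i.+1, i & T])).
  have := req_catl A (req_catr T (req_sym (req_braid (k := i) (n' := n') _))).
  rewrite /=; apply; lia.
have := req_catr [:: i.+1, i & T] (req_comm (k := i) (s := A) (n' := n') _ _).
rewrite -!catA /=; apply; first lia.
apply/allP => x /HA /andP [hx1 hx2]; apply/andP; split; lia.
Qed.

Lemma step n' m w : m < n'.+1 -> all (fun x => x <= m) w ->
  exists u l, [/\ all (fun x => x < m) u, l <= m.+1 & req n' w (u ++ D m l)].
Proof.
move=> hm; elim/last_ind: w => [|w k IH].
  by move=> _; exists [::], 0; split => //; exact: req_refl.
rewrite all_rcons => /andP [hk hw].
have [u [l [hu hl hr]]] := IH hw.
have [u' [l' [hu' hl' hr']]] := absorb hm hk hl.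
exists (u ++ u'), l'; split => //; first by rewrite all_cat hu hu'.
rewrite -cats1; apply: (req_trans (b := u ++ D m l ++ [:: k])).
  by rewrite catA; apply: req_catr.
by rewrite -catA; apply: req_catl.
Qed.

Lemma fix_point n' m u : m < n'.+1 -> all (fun x => x < m) u ->
  F (rw n' u) (inord m.+1) = inord m.+1.
Proof.
move=> hm; elim: u => [|k u IH] /=; first by rewrite /rw /= F_nil perm1.
case/andP => hk hu; rewrite F_rw_cons; last lia.
rewrite permM /tr tpermD ?IH //; apply: inord_neq; lia.
Qed.

Lemma D_point n' m l : m < n'.+1 -> l <= m.+1 ->
  F (rw n' (D m l)) (inord m.+1) = inord (m.+1 - l).
Proof.
elim: l m => [|l IH] m hm hl; first by rewrite /rw /= F_nil perm1 subn0.
rewrite [D m _]/= F_rw_cons // permM /tr tpermR.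
case: m hm hl IH => [|m] hm hl IH.
  by case: l hl {IH} => // _; rewrite /rw /= F_nil perm1.
rewrite IH //; lia.
Qed.

Lemma coxeter n' m w : m <= n'.+1 -> all (fun x => x < m) w -> F (rw n' w) = 1 ->
  req n' w [::].
Proof.
elim: m w => [|m IH] w hm.
  by case: w => //= _ _; exact: req_refl.
move=> hw h1.
have hw' : all (fun x => x <= m) w by apply/allP => x /(allP hw).
have [u [l [hu hl hr]]] := step (n' := n') (m := m) ltac:(lia) hw'.
have e := F_vb hr; rewrite h1 F_rw_cat in e.
have el : l = 0.
  have := congr1 (fun p : 'S_n'.+2 => p (inord m.+1)) e.
  rewrite /= perm1 permM fix_point // ?D_point //; try lia.
  move/(congr1 val); rewrite /= !inordK //; lia.
rewrite el /= cats0 in hr e; rewrite F_nil mulg1 in e.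
apply: (req_trans hr); apply: IH => //; lia.
Qed.

Lemma inH_F n' (w : word n'.+2) : inH w -> F w = 1.
Proof. move=> [u [hu hv]]; rewrite -(F_vb hv); exact: F_nc. Qed.

Lemma inH_conj' n (x : letter n) h : inH h -> inH (x :: h ++ [:: linv x]).
Proof.
move=> [u [hu hv]]; apply: (inH_vb (inH_conj x hu)).
exact: (vb_cat (E_refl [:: x]) (vb_cat hv (E_refl _))).
Qed.

Lemma rho_letter n (i : 'I_n.-1) e : vb_eq [:: (false, i, e)] [:: rho i].
Proof.
case: e; last exact: E_refl.
apply: (E_trans (v := [:: (false, i, true)] ++ [:: rho i; rho i])).
  have := E_ctx [:: (false, i, true)] [::] (E_sym (E_rel (R_rsq i))); by rewrite cats0.
exact: (E_ctx [::] [:: rho i] (E_cancel (false, i, true))).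
Qed.

Lemma decomp n' (w : word n'.+2) :
  exists h l, [/\ inH h, all (fun k => k < n'.+1) l & vb_eq w (h ++ rw n' l)].
Proof.
elim: w => [|x w [h [l [hh hl hv]]]].
  exists [::], [::]; split => //; [exact: inH_nil | exact: E_refl].
case: x => [[[] i] e].
  exists ((true, i, e) :: h), l; split => //.
    exact: (inH_cat (inH_sig i e) hh).
  exact: (vb_cat (E_refl [:: (true, i, e)]) hv).
exists ((false, i, e) :: h ++ [:: linv (false, i, e)]), (val i :: l); split.
- exact: inH_conj'.
- by rewrite /= hl ltn_ord.
- apply: (E_trans (vb_cat (E_refl [:: (false, i, e)]) hv)).
  apply: (E_trans (vb_ins (false, i, e) ((false, i, e) :: h) (rw n' l))).
  have -> : ((false, i, e) :: h) ++ [:: linv (false, i, e); (false, i, e)] ++ rw n' l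
    = ((false, i, e) :: h ++ [:: linv (false, i, e)]) ++ [:: (false, i, e)] ++ rw n' l
    by rewrite /= -!catA.
  have -> : rw n' (val i :: l) = [:: rho i] ++ rw n' l by rewrite /rw /= inord_val.
  apply: vb_cat; first exact: E_refl.
  apply: vb_cat; [exact: rho_letter | exact: E_refl].
Qed.

Theorem proposition7p3 (n : nat) :
  (forall w : word n, inH w <-> eta1 (chi w) = 1) /\
  (forall w : word n, nu w = 1 <-> eta2 (chi w) = 1) /\
  (forall w : word n, (inH w /\ nu w = 1) <-> chi w = mone).
Proof.
have P2 : forall w : word n, nu w = 1 <-> eta2 (chi w) = 1.
  by move=> w; rewrite /eta2 chi12.
have P1 : forall w : word n, inH w <-> eta1 (chi w) = 1.
  case: n P2 => [|[|n']] P2 w.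
  - case: w => [|[[b i] e] w]; last by case: i.
    by split => // _; exact: inH_nil.
  - case: w => [|[[b i] e] w]; last by case: i.
    by split => // _; exact: inH_nil.
  rewrite /eta1 chi2; split; first exact: inH_F.
  move=> hF.
  have [h [l [hh hl hv]]] := decomp w.
  have e := F_vb hv; rewrite hF F_cat inH_F // mul1g in e.
  have hc := coxeter (m := n'.+1) (leqnn _) hl (esym e).
  apply: (inH_vb hh); apply: E_sym; apply: (E_trans hv).
  have := vb_cat (E_refl h) hc; by rewrite cats0.
split => //; split => // w.
rewrite P1 P2 /eta1 /eta2 /mone; case: (chi w) => a b /=; split.
- by case=> -> ; rewrite mulg1 => ->.
- by case=> -> ->; rewrite mulg1.
Qed.
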